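(* Let $(X,d)$ and $(Y,\rho)$ be compact metric spaces, let $F=\{f_1,\dots,f_k\}$ be a multiple mapping on $X$ and $G=\{g_1,\dots,g_m\}$ a multiple mapping on $Y$, and let $T:X\to Y$ be a topological conjugacy from $(X,F)$ to $(Y,G)$. Then $F$ is Hausdorff metric Kato chaotic (with respect to $d_H$) if and only if $G$ is Hausdorff metric Kato chaotic (with respect to $\rho_H$).
   Context: A multiple mapping $F=\{f_1,\dots,f_k\}$ on $X$ is a finite tuple of continuous self-maps of $X$; for $x\in X$ and $n\ge1$, $F(x)=\{f_1(x),\dots,f_k(x)\}$ and $F^n(x)=\{f_{i_1}f_{i_2}\cdots f_{i_n}(x)\mid i_1,\dots,i_n\in\{1,\dots,k\}\}$; for $A\subset X$, $F(A)=\bigcup_{a\in A}F(a)$. $d_H$ (resp. $\rho_H$) denotes the Hausdorff metric $d_H(A,B)=\max\{\sup_{a\in A}\inf_{b\in B}d(a,b),\sup_{b\in B}\inf_{a\in A}d(a,b)\}$ on nonempty compact subsets. $F$ is Hausdorff metric sensitive if there is $\delta>0$ such that for every nonempty open $U\subset X$ there exist $x,y\in U$, $n\in\mathbb{Z}^+$ with $d_H(F^n(x),F^n(y))>\delta$; Hausdorff metric accessible if for every $\epsilon>0$ and all nonempty open $U,V\subset X$ there exist $x\in U,y\in V,n\in\mathbb{Z}^+$ with $d_H(F^n(x),F^n(y))<\epsilon$; Hausdorff metric Kato chaotic if it is both. Here $\mathbb{Z}^+=\{1,2,\dots\}$. A topological conjugacy from $(X,F)$ to $(Y,G)$ is a homeomorphism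 $T:X\to Y$ such that $T(F(x))=G(T(x))$ for all $x\in X$. *)

(* Defs.v *)
From Stdlib Require Import Reals List.
Open Scope R_scope.
Import ListNotations.

Record MetricSpace := {
  carrier :> Type;
  dist : carrier -> carrier -> R;
  dist_nonneg : forall x y, 0 <= dist x y;
  dist_eq0 : forall x y, dist x y = 0 <-> x = y;
  dist_sym : forall x y, dist x y = dist y x;
  dist_tri : forall x y z, dist x z <= dist x y + dist y z
}.

Section Metric.
Variable X : MetricSpace.

Definition mopen (U : X -> Prop) : Prop :=
  forall x, U x -> exists r, 0 < r /\ forall y, dist X x y < r -> U y.

Definition mcompact : Prop :=
  forall (I : Type) (U : I -> X -> Prop),
    (forall i, mopen (U i)) -> (forall x, exists i, U i x) ->
    exists l : list I, forall x, exists i, In i l /\ U i x.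

Definition nonempty (U : X -> Prop) : Prop := exists x, U x.
End Metric.

Arguments mopen {X}.
Arguments nonempty {X}.

Definition mcontinuous {X Y : MetricSpace} (f : X -> Y) : Prop :=
  forall x eps, 0 < eps -> exists delta, 0 < delta /\
    forall y, dist X x y < delta -> dist Y (f x) (f y) < eps.

Definition homeomorphism {X Y : MetricSpace} (T : X -> Y) : Prop :=
  exists S : Y -> X, (forall x, S (T x) = x) /\ (forall y, T (S y) = y) /\
    mcontinuous T /\ mcontinuous S.

Definition multiple_mapping {X : MetricSpace} (F : list (X -> X)) : Prop :=
  F <> [] /\ forall f, In f F -> mcontinuous f.

Definition Fimg {X : Type} (F : list (X -> X)) (x : X) : list X :=
  map (fun f => f x) F.

(* F^n(x) = { f_{i1} ... f_{in} (x) }, computed as F(F^{n-1}(x)) *)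
Fixpoint Fiter {X : Type} (F : list (X -> X)) (n : nat) (x : X) : list X :=
  match n with
  | O => [x]
  | S m => flat_map (Fimg F) (Fiter F m x)
  end.

Definition lmax (l : list R) : R :=
  match l with [] => 0 | a :: t => fold_right Rmax a t end.
Definition lmin (l : list R) : R :=
  match l with [] => 0 | a :: t => fold_right Rmin a t end.

(* Hausdorff distance between finite nonempty sets (given as lists):
   sup = max and inf = min for finite nonempty sets. *)
Definition hausdorff {X : MetricSpace} (A B : list X) : R :=
  Rmax (lmax (map (fun a => lmin (map (fun b => dist X a b) B)) A))
       (lmax (map (fun b => lmin (map (fun a => dist X a b) A)) B)).

Definition H_sensitive {X : MetricSpace} (F : list (X -> X)) : Prop :=
  exists delta, 0 < delta /\
    forall U : X -> Prop, mopen U -> nonempty U ->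
      exists x y n, U x /\ U y /\ (1 <= n)%nat /\
        hausdorff (Fiter F n x) (Fiter F n y) > delta.

Definition H_accessible {X : MetricSpace} (F : list (X -> X)) : Prop :=
  forall eps, 0 < eps ->
    forall U V : X -> Prop, mopen U -> nonempty U -> mopen V -> nonempty V ->
      exists x y n, U x /\ V y /\ (1 <= n)%nat /\
        hausdorff (Fiter F n x) (Fiter F n y) < eps.

Definition H_Kato_chaotic {X : MetricSpace} (F : list (X -> X)) : Prop :=
  H_sensitive F /\ H_accessible F.

(* topological conjugacy: homeomorphism with T(F(x)) = G(T(x)) as sets *)
Definition conjugacy {X Y : MetricSpace} (T : X -> Y)
    (F : list (X -> X)) (G : list (Y -> Y)) : Prop :=
  homeomorphism T /\
  forall x z, In z (map T (Fimg F x)) <-> In z (Fimg G (T x)).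

(* Main.v *)
Require Import Defs.
From Stdlib Require Import Reals List Lra.
Open Scope R_scope.
Import ListNotations.

Lemma fr_min_le a t : forall r, In r (a::t) -> fold_right Rmin a t <= r.
Proof.
  induction t as [|b t IH]; simpl; intros r Hr.
  - destruct Hr as [<-|[]]; lra.
  - destruct Hr as [Hr|[Hr|Hr]].
    + eapply Rle_trans; [apply Rmin_r|]. apply IH; simpl; auto.
    + subst; apply Rmin_l.
    + eapply Rle_trans; [apply Rmin_r|]. apply IH; simpl; auto.
Qed.

Lemma fr_min_in a t : In (fold_right Rmin a t) (a::t).
Proof.
  induction t as [|b t IH]; simpl; auto.
  unfold Rmin; destruct Rle_dec; simpl in *; tauto.
Qed.

Lemma fr_max_ge a t : forall r, In r (a::t) -> r <= fold_right Rmax a t.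
Proof.
  induction t as [|b t IH]; simpl; intros r Hr.
  - destruct Hr as [<-|[]]; lra.
  - destruct Hr as [Hr|[Hr|Hr]].
    + eapply Rle_trans; [|apply Rmax_r]. apply IH; simpl; auto.
    + subst; apply Rmax_l.
    + eapply Rle_trans; [|apply Rmax_r]. apply IH; simpl; auto.
Qed.

Lemma fr_max_in a t : In (fold_right Rmax a t) (a::t).
Proof.
  induction t as [|b t IH]; simpl; auto.
  unfold Rmax; destruct Rle_dec; simpl in *; tauto.
Qed.

Lemma lmin_le l r : In r l -> lmin l <= r.
Proof. destruct l; simpl; [tauto|]. apply fr_min_le. Qed.
Lemma lmin_in l : l <> [] -> In (lmin l) l.
Proof. destruct l; simpl; [tauto|]. intros _; apply fr_min_in. Qed.
Lemma lmax_ge l r : In r l -> r <= lmax l.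
Proof. destruct l; simpl; [tauto|]. apply fr_max_ge. Qed.
Lemma lmax_in l : l <> [] -> In (lmax l) l.
Proof. destruct l; simpl; [tauto|]. intros _; apply fr_max_in. Qed.
Lemma lmax_lt l e : 0 < e -> (forall r, In r l -> r < e) -> lmax l < e.
Proof.
  intros He H. destruct l as [|a t]; [simpl; lra|].
  apply H, lmax_in; discriminate.
Qed.

Definition Pd (X : MetricSpace) (A B : list X) e :=
  forall a, In a A -> exists b, In b B /\ Defs.dist X a b < e.

Lemma H_to_P (X : MetricSpace) (A B : list X) e :
  B <> [] -> hausdorff A B < e -> Pd X A B e.
Proof.
  intros HB H a Ha. unfold hausdorff in H.
  assert (Hm : In (lmin (map (fun b => Defs.dist X a b) B)) (map (fun b => Defs.dist X a b) B)).
  { apply lmin_in. destruct B; simpl; congruence. }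
  apply in_map_iff in Hm. destruct Hm as [b [Hb HbB]].
  exists b; split; auto. rewrite Hb.
  assert (H1 := lmax_ge (map (fun a => lmin (map (fun b => Defs.dist X a b) B)) A)
     (lmin (map (fun b => Defs.dist X a b) B))
     (in_map (fun a => lmin (map (fun b => Defs.dist X a b) B)) A a Ha)).
  pose proof (Rmax_l (lmax (map (fun a => lmin (map (fun b => Defs.dist X a b) B)) A))
       (lmax (map (fun b => lmin (map (fun a => Defs.dist X a b) A)) B))).
  lra.
Qed.

Lemma H_to_P' (X : MetricSpace) (A B : list X) e :
  A <> [] -> hausdorff A B < e -> Pd X B A e.
Proof.
  intros HA H b Hb. unfold hausdorff in H.
  assert (Hm : In (lmin (map (fun a => Defs.dist X a b) A)) (map (fun a => Defs.dist X a b) A)).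
  { apply lmin_in. destruct A; simpl; congruence. }
  apply in_map_iff in Hm. destruct Hm as [a [Ha HaA]].
  exists a; split; auto. rewrite Defs.dist_sym, Ha.
  assert (H1 := lmax_ge (map (fun b => lmin (map (fun a => Defs.dist X a b) A)) B)
     (lmin (map (fun a => Defs.dist X a b) A))
     (in_map (fun b => lmin (map (fun a => Defs.dist X a b) A)) B b Hb)).
  pose proof (Rmax_r (lmax (map (fun a => lmin (map (fun b => Defs.dist X a b) B)) A))
       (lmax (map (fun b => lmin (map (fun a => Defs.dist X a b) A)) B))).
  lra.
Qed.

Lemma P_to_H (X : MetricSpace) (A B : list X) e :
  0 < e -> Pd X A B e -> Pd X B A e -> hausdorff A B < e.
Proof.
  intros He P1 P2. unfold hausdorff. apply Rmax_lub_lt; apply lmax_lt; auto;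
  intros r Hr; apply in_map_iff in Hr; destruct Hr as [a [<- Ha]].
  - destruct (P1 a Ha) as [b [Hb Hd]].
    pose proof (lmin_le _ _ (in_map (fun b => Defs.dist X a b) B b Hb)). lra.
  - destruct (P2 a Ha) as [b [Hb Hd]].
    pose proof (lmin_le _ _ (in_map (fun c => Defs.dist X c a) A b Hb)).
    simpl in H. rewrite Defs.dist_sym in Hd. lra.
Qed.

Lemma Pd_transfer (X Y : MetricSpace) (T : X -> Y) e e' A B A' B' :
  (forall a b, Defs.dist X a b < e -> Defs.dist Y (T a) (T b) < e') ->
  (forall z, In z A' -> exists a, In a A /\ z = T a) ->
  (forall b, In b B -> In (T b) B') ->
  Pd X A B e -> Pd Y A' B' e'.
Proof.
  intros HT H1 H2 P z Hz. destruct (H1 z Hz) as [a [Ha ->]].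
  destruct (P a Ha) as [b [Hb Hd]]. exists (T b); auto.
Qed.

Lemma iter_conj (X Y : MetricSpace) (T : X -> Y) F G :
  (forall x z, In z (map T (Fimg F x)) <-> In z (Fimg G (T x))) ->
  forall n x z, In z (Fiter G n (T x)) <-> exists a, In a (Fiter F n x) /\ z = T a.
Proof.
  intros Hc. induction n as [|n IH]; intros x z; simpl.
  - split.
    + intros [<-|[]]. exists x; auto.
    + intros [a [[<-|[]] ->]]; auto.
  - rewrite in_flat_map. split.
    + intros [w [Hw Hz]]. apply IH in Hw. destruct Hw as [a [Ha ->]].
      apply Hc in Hz. apply in_map_iff in Hz. destruct Hz as [c [<- Hcc]].
      exists c; split; auto. apply in_flat_map. exists a; auto.
    + intros [c [Hcc ->]]. apply in_flat_map in Hcc. destruct Hcc as [a [Ha Hca]].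
      exists (T a); split.
      * apply IH; eauto.
      * apply Hc. apply in_map; auto.
Qed.

Lemma iter_ne (X : Type) (F : list (X -> X)) n x :
  F <> [] -> Fiter F n x <> [].
Proof.
  intros HF. assert (exists z, In z (Fiter F n x)) as [z Hz].
  { induction n as [|n IH]; simpl.
    - exists x; auto.
    - destruct IH as [w Hw]. destruct F as [|f F']; [congruence|].
      exists (f w). apply in_flat_map. exists w; split; auto. simpl; auto. }
  intro E; rewrite E in Hz; destruct Hz.
Qed.

Lemma ball_open (X : MetricSpace) (c : X) r : mopen (fun y => Defs.dist X c y < r).
Proof.
  intros y Hy. exists (r - Defs.dist X c y); split; [lra|].
  intros z Hz. pose proof (Defs.dist_tri X c y z). lra.
Qed.

Lemma unif (X Y : MetricSpace) (T : X -> Y) : mcompact X -> mcontinuous T ->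
  forall eps, 0 < eps -> exists delta, 0 < delta /\
    forall a b, Defs.dist X a b < delta -> Defs.dist Y (T a) (T b) < eps.
Proof.
  intros HK HT eps He.
  set (I := {p : X * R | 0 < snd p /\ forall y, Defs.dist X (fst p) y < snd p ->
             Defs.dist Y (T (fst p)) (T y) < eps/2}).
  destruct (HK I (fun p y => Defs.dist X (fst (proj1_sig p)) y < snd (proj1_sig p) / 2))
    as [l Hl].
  - intros i; apply ball_open.
  - intro x. destruct (HT x (eps/2)) as [d [Hd Hd']]; [lra|].
    exists (exist _ (x,d) (conj Hd Hd')); simpl.
    rewrite (proj2 (Defs.dist_eq0 X x x) eq_refl); lra.
  - set (delta := fold_right (fun (p : I) acc => Rmin (snd (proj1_sig p) / 2) acc) 1 l).
    assert (Hpos : 0 < delta).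
    { unfold delta; clear Hl; induction l as [|p l IH]; simpl; [lra|].
      apply Rmin_glb_lt; [|exact IH]. destruct (proj2_sig p) as [Hr _]; lra. }
    assert (Hle : forall p, In p l -> delta <= snd (proj1_sig p) / 2).
    { unfold delta; clear Hl Hpos; induction l as [|q l IH]; simpl; [tauto|].
      intros p [<-|Hp]; [apply Rmin_l|].
      eapply Rle_trans; [apply Rmin_r|]; auto. }
    exists delta; split; auto. intros a b Hab.
    destruct (Hl a) as [p [Hp Ha]]. specialize (Hle p Hp).
    destruct p as [[c r] [Hr Hcr]]; simpl in *.
    pose proof (Defs.dist_tri X c a b).
    pose proof (Hcr a ltac:(lra)). pose proof (Hcr b ltac:(lra)).
    pose proof (Defs.dist_tri Y (T a) (T c) (T b)) as H3. pose proof (Defs.dist_sym Y (T a) (T c)).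
    lra.
Qed.

Lemma pre_open (X Y : MetricSpace) (T : X -> Y) U :
  mcontinuous T -> mopen U -> mopen (fun x => U (T x)).
Proof.
  intros HT HU x Hx. destruct (HU _ Hx) as [r [Hr H]].
  destruct (HT x r Hr) as [d [Hd H']]. exists d; split; auto.
Qed.

Lemma dir (X Y : MetricSpace) (F : list (X -> X)) (G : list (Y -> Y)) (T : X -> Y)
  (S : Y -> X) :
  mcompact X -> mcompact Y -> F <> [] -> G <> [] ->
  (forall x, S (T x) = x) -> (forall y, T (S y) = y) ->
  mcontinuous T -> mcontinuous S ->
  (forall x z, In z (map T (Fimg F x)) <-> In z (Fimg G (T x))) ->
  H_Kato_chaotic F -> H_Kato_chaotic G.
Proof.
  intros HKX HKY HF HG ST TS HT HS Hc [[delta [Hd Hsens]] Hacc].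
  pose proof (iter_conj X Y T F G Hc) as IC.
  split.
  - destruct (unif Y X S HKY HS delta Hd) as [eta [Heta HU]].
    exists (eta/2). split; [lra|]. intros U HUo [y0 Hy0].
    destruct (Hsens (fun x => U (T x)) (pre_open X Y T U HT HUo)
                (ex_intro (fun x => _ (T x)) (S y0) (eq_ind_r _ Hy0 (TS y0))))
      as [x [x' [n [Hx [Hx' [Hn Hgt]]]]]].
    exists (T x), (T x'), n. repeat split; auto.
    apply Rnot_le_lt; intro Hle.
    assert (Hlt : hausdorff (Fiter G n (T x)) (Fiter G n (T x')) < eta) by lra.
    pose proof (H_to_P _ _ _ _ (iter_ne _ G n (T x') HG) Hlt) as P1.
    pose proof (H_to_P' _ _ _ _ (iter_ne _ G n (T x) HG) Hlt) as P2.
    assert (Q1 : Pd X (Fiter F n x) (Fiter F n x') delta).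
    { eapply Pd_transfer; [exact HU| | |exact P1].
      - intros z Hz. exists (T z); split; [apply IC; eauto| rewrite ST; auto].
      - intros b Hb. apply IC in Hb. destruct Hb as [c [Hc' ->]]. rewrite ST; auto. }
    assert (Q2 : Pd X (Fiter F n x') (Fiter F n x) delta).
    { eapply Pd_transfer; [exact HU| | |exact P2].
      - intros z Hz. exists (T z); split; [apply IC; eauto| rewrite ST; auto].
      - intros b Hb. apply IC in Hb. destruct Hb as [c [Hc' ->]]. rewrite ST; auto. }
    pose proof (P_to_H _ _ _ _ Hd Q1 Q2). lra.
  - intros eps He U V HU [u Hu] HV [v Hv].
    destruct (unif X Y T HKX HT eps He) as [eta [Heta HT']].
    destruct (Hacc eta Heta (fun x => U (T x)) (fun x => V (T x))
       (pre_open X Y T U HT HU) (ex_intro (fun x => _ (T x)) (S u) (eq_ind_r _ Hu (TS u)))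
       (pre_open X Y T V HT HV) (ex_intro (fun x => _ (T x)) (S v) (eq_ind_r _ Hv (TS v))))
      as [x [y [n [Hx [Hy [Hn Hlt]]]]]].
    exists (T x), (T y), n. repeat split; auto.
    pose proof (H_to_P _ _ _ _ (iter_ne _ F n y HF) Hlt) as P1.
    pose proof (H_to_P' _ _ _ _ (iter_ne _ F n x HF) Hlt) as P2.
    apply P_to_H; auto.
    + eapply Pd_transfer; [exact HT'| | |exact P1].
      * intros z Hz. apply IC in Hz. exact Hz.
      * intros b Hb. apply IC. eauto.
    + eapply Pd_transfer; [exact HT'| | |exact P2].
      * intros z Hz. apply IC in Hz. exact Hz.
      * intros b Hb. apply IC. eauto.
Qed.

Theorem corollary4p4 (X Y : MetricSpace) (F : list (X -> X)) (G : list (Y -> Y))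
  (T : X -> Y) :
  mcompact X -> mcompact Y ->
  multiple_mapping F -> multiple_mapping G ->
  conjugacy T F G ->
  (H_Kato_chaotic F <-> H_Kato_chaotic G).
Proof.
  intros HKX HKY [HF _] [HG _] [[S [ST [TS [HT HS]]]] Hc]. split.
  - apply (dir X Y F G T S); auto.
  - apply (dir Y X G F S T); auto.
    intros y z. split.
    + intros Hz. apply in_map_iff in Hz. destruct Hz as [w [<- Hw]].
      rewrite <- (TS y) in Hw. apply Hc in Hw. apply in_map_iff in Hw.
      destruct Hw as [a [<- Ha]]. rewrite ST. exact Ha.
    + intros Hz. assert (Hw : In (T z) (Fimg G y)).
      { pose proof (proj1 (Hc (S y) (T z)) (in_map T _ z Hz)) as Hw. rewrite TS in Hw. exact Hw. }
      rewrite <- (ST z). apply in_map; auto.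
Qed.
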